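(* Let $b\in(0,\frac16)$, let $G$ and $v_{\max}$ be as below, and let $u_-,u_+\in[-1,1]$ with $u_->v_{\max}$ and $u_+<-v_{\max}$. Then the upper concave envelope $G_\frown$ of $G$ on $[u_+,u_-]$ equals $G$ on $[u_+,-v_{\max}]\cup[v_{\max},u_-]$ and equals the constant $G(v_{\max})$ on $[-v_{\max},v_{\max}]$. Consequently, the entropy solution $u(x,t)$ of the Riemann problem $\partial_tu+\partial_xG(u)=0$, $u(x,0)=u_-$ for $x\le0$, $u(x,0)=u_+$ for $x>0$, consists of a rarefaction fan, a stationary shock at $x=0$, and a rarefaction fan, with $\lim_{x\to0^-}u(x,t)=v_{\max}$ and $\lim_{x\to0^+}u(x,t)=-v_{\max}$ for every $t>0$; in particular the jump at $0$ is $-2v_{\max}$.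
   Context: $G(v)=-\frac{v^2}{2}+\frac{4b^2+(1-2b)^2v^2}{2(4b^2+(1-2b)\sqrt{4b^2+(1-4b)v^2})}$ on $[-1,1]$ and $v_{\max}=\frac12\sqrt{\frac{(1+2b)(1-6b)}{1-4b}}$ (the positive global maximum point of $G$). The upper concave envelope of $G$ on an interval $I$ is the smallest concave function on $I$ that is $\ge G$ on $I$. For $u_->u_+$, the entropy solution of the Riemann problem is given by: $u(x,t)=u_-$ if $x\le (G_\frown)'(u_-)t$; $u(x,t)=[(G_\frown)']^{-1}(x/t)$ if $(G_\frown)'(u_-)t<x\le (G_\frown)'(u_+)t$; $u(x,t)=u_+$ if $x>(G_\frown)'(u_+)t$, where $G_\frown$ is the upper concave envelope of $G$ on $[u_+,u_-]$. *)

(* Defs.v *)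
From Stdlib Require Import Reals Lra.
Open Scope R_scope.

Definition G (b v : R) : R :=
  - v ^ 2 / 2
  + (4 * b ^ 2 + (1 - 2 * b) ^ 2 * v ^ 2)
    / (2 * (4 * b ^ 2 + (1 - 2 * b) * sqrt (4 * b ^ 2 + (1 - 4 * b) * v ^ 2))).

Definition vmax (b : R) : R :=
  / 2 * sqrt ((1 + 2 * b) * (1 - 6 * b) / (1 - 4 * b)).

Definition concave_on (a c : R) (f : R -> R) : Prop :=
  forall x y l, a <= x <= c -> a <= y <= c -> 0 <= l <= 1 ->
    l * f x + (1 - l) * f y <= f (l * x + (1 - l) * y).

Definition is_upper_concave_envelope (a c : R) (g H : R -> R) : Prop :=
  concave_on a c H /\
  (forall x, a <= x <= c -> g x <= H x) /\
  (forall H', concave_on a c H' -> (forall x, a <= x <= c -> g x <= H' x) ->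
     forall x, a <= x <= c -> H x <= H' x).

Definition deriv_within (a c : R) (f : R -> R) (v d : R) : Prop :=
  forall eps, 0 < eps -> exists delta, 0 < delta /\
    forall y, a <= y <= c -> y <> v -> Rabs (y - v) < delta ->
      Rabs ((f y - f v) / (y - v) - d) < eps.

(* u is the solution of the Riemann problem given by the formula of the paper,
   where H = G_frown (on [up, um], up < um) and dH is its derivative on [up, um];
   the inverse [(G_frown)']^{-1}(x/t) is read as: a value w in [up, um] with
   dH w = x / t. *)
Definition riemann_formula (up um : R) (dH : R -> R) (u : R -> R -> R) : Prop :=
  forall x t, 0 < t ->
    (x <= dH um * t -> u x t = um) /\
    (dH um * t < x <= dH up * t ->
       up <= u x t <= um /\ dH (u x t) = x / t) /\
    (dH up * t < x -> u x t = up).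

(* Main.v *)
Require Import Defs.
From Stdlib Require Import Reals Lra Psatz.
Open Scope R_scope.

From Stdlib Require Import FunctionalExtensionality.
Lemma div_le_helper a b p q : 0 < p -> 0 < q -> a * q <= b * p -> a / p <= b / q.
Proof.
  intros Hp Hq H.
  apply (Rmult_le_reg_r (p*q)); [nra|].
  replace (a / p * (p * q)) with (a*q) by (field; lra).
  replace (b / q * (p * q)) with (b*p) by (field; lra). lra.
Qed.

Lemma chord_core a c f x y z : concave_on a c f -> a <= x -> x < y -> y < z -> z <= c ->
  (z - y) * f x + (y - x) * f z <= (z - x) * f y.
Proof.
  intros Hc H1 H2 H3 H4.
  set (l := (z - y) / (z - x)).
  assert (Hl : 0 <= l <= 1).
  { unfold l; split.
    - apply Rmult_le_pos; [lra| left; apply Rinv_0_lt_compat; lra].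
    - apply (Rmult_le_reg_r (z-x)); [lra|]. unfold Rdiv. rewrite Rmult_assoc, Rinv_l; lra. }
  pose proof (Hc x z l ltac:(lra) ltac:(lra) Hl) as Hh.
  replace (l * x + (1 - l) * z) with y in Hh by (unfold l; field; lra).
  assert (E1 : (z - y) = l * (z - x)) by (unfold l; field; lra).
  assert (E2 : (y - x) = (1 - l) * (z - x)) by (unfold l; field; lra).
  rewrite E1, E2. nra.
Qed.

Lemma slope1 a c f x y z : concave_on a c f -> a <= x -> x < y -> y < z -> z <= c ->
  (f z - f x) / (z - x) <= (f y - f x) / (y - x).
Proof.
  intros Hc H1 H2 H3 H4. pose proof (chord_core a c f x y z Hc H1 H2 H3 H4).
  apply div_le_helper; nra.
Qed.

Lemma slope2 a c f x y z : concave_on a c f -> a <= x -> x < y -> y < z -> z <= c ->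
  (f z - f y) / (z - y) <= (f z - f x) / (z - x).
Proof.
  intros Hc H1 H2 H3 H4. pose proof (chord_core a c f x y z Hc H1 H2 H3 H4).
  apply div_le_helper; nra.
Qed.

Lemma slope3 a c f x y z : concave_on a c f -> a <= x -> x < y -> y < z -> z <= c ->
  (f z - f y) / (z - y) <= (f y - f x) / (y - x).
Proof.
  intros Hc H1 H2 H3 H4. eapply Rle_trans. eapply slope2; eauto.
  eapply slope1; eauto.
Qed.

Lemma deriv_right a c f u d w : concave_on a c f -> deriv_within a c f u d ->
  a <= u -> u < w -> w <= c -> (f w - f u) / (w - u) <= d.
Proof.
  intros Hc Hd H1 H2 H3.
  destruct (Rle_or_lt ((f w - f u) / (w - u)) d) as [|Hlt]; auto. exfalso.
  set (q := (f w - f u) / (w - u)) in *.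
  destruct (Hd (q - d)) as [del [Hdel Hy]]; [lra|].
  set (r := Rmin del (w - u)).
  assert (Hr : 0 < r) by (apply Rmin_glb_lt; lra).
  pose proof (Rmin_l del (w-u)). pose proof (Rmin_r del (w-u)). fold r in H, H0.
  set (z := u + r / 2).
  specialize (Hy z ltac:(unfold z; lra) ltac:(unfold z; lra)).
  assert (Habs : Rabs (z - u) < del) by (rewrite Rabs_pos_eq; unfold z; lra).
  specialize (Hy Habs). apply Rabs_def2 in Hy.
  pose proof (slope1 a c f u z w Hc H1 ltac:(unfold z; lra) ltac:(unfold z; lra) H3).
  fold q in H4. lra.
Qed.

Lemma deriv_left a c f u d w : concave_on a c f -> deriv_within a c f u d ->
  a <= w -> w < u -> u <= c -> d <= (f u - f w) / (u - w).
Proof.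
  intros Hc Hd H1 H2 H3.
  destruct (Rle_or_lt d ((f u - f w) / (u - w))) as [|Hlt]; auto. exfalso.
  set (q := (f u - f w) / (u - w)) in *.
  destruct (Hd (d - q)) as [del [Hdel Hy]]; [lra|].
  set (r := Rmin del (u - w)).
  assert (Hr : 0 < r) by (apply Rmin_glb_lt; lra).
  pose proof (Rmin_l del (u-w)). pose proof (Rmin_r del (u-w)). fold r in H, H0.
  set (z := u - r / 2).
  specialize (Hy z ltac:(unfold z; lra) ltac:(unfold z; lra)).
  assert (Habs : Rabs (z - u) < del) by (rewrite Rabs_left; unfold z; lra).
  specialize (Hy Habs). apply Rabs_def2 in Hy.
  replace ((f z - f u) / (z - u)) with ((f u - f z) / (u - z)) in Hy
    by (unfold z; field; lra).
  pose proof (slope2 a c f w z u Hc H1 ltac:(unfold z; lra) ltac:(unfold z; lra) H3).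
  fold q in H4. lra.
Qed.
Definition S b v := sqrt (4 * b ^ 2 + (1 - 4 * b) * v ^ 2).
Definition mm b := (1 - 2 * b) / 2.
Definition kk b := 2 * (1 - 4 * b).
Definition Hs b v := (mm b ^ 2 - (Rmax (S b v - mm b) 0) ^ 2) / kk b.
Definition Gmax b := mm b ^ 2 / kk b.

Lemma S_prop b v : 0 < b < 1/6 -> 0 <= S b v /\ S b v ^ 2 = 4 * b ^ 2 + (1 - 4 * b) * v ^ 2.
Proof.
  intros Hb. unfold S. split; [apply sqrt_pos|].
  rewrite pow2_sqrt; [reflexivity|nra].
Qed.

Lemma S_even b v : S b (- v) = S b v.
Proof. unfold S. f_equal. ring. Qed.

Lemma G_S b v : 0 < b < 1/6 -> G b v = (mm b ^ 2 - (S b v - mm b) ^ 2) / kk b.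
Proof.
  intros Hb. destruct (S_prop b v Hb) as [H0 H2].
  unfold G. fold (S b v). set (s := S b v) in *. unfold mm, kk.
  assert (HD : 0 < 4 * b ^ 2 + (1 - 2 * b) * s) by nra.
  assert (E : (4 * b ^ 2 + (1 - 2 * b) ^ 2 * v ^ 2) * (1 - 4*b)
             - (4 * b ^ 2 + (1 - 2 * b) * s) * ((1 - 2*b) * s - 4 * b^2)
             = - (1 - 2*b)^2 * (s^2 - (4 * b ^ 2 + (1 - 4 * b) * v ^ 2))) by ring.
  rewrite H2 in E.
  replace (4 * b ^ 2 + (1 - 2 * b) ^ 2 * v ^ 2) with
    ((4 * b ^ 2 + (1 - 2 * b) * s) * ((1 - 2*b) * s - 4 * b^2) / (1 - 4*b))
    by (field_simplify_eq; [lra| lra]).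
  replace (v ^ 2) with ((s^2 - 4 * b^2) / (1 - 4 * b)) by (field_simplify_eq; lra).
  field. lra.
Qed.

Lemma vmax_prop b : 0 < b < 1/6 -> 0 < vmax b /\ vmax b ^ 2 = (1 + 2 * b) * (1 - 6 * b) / (4 * (1 - 4 * b)).
Proof.
  intros Hb. unfold vmax.
  assert (HQ : 0 < (1 + 2 * b) * (1 - 6 * b) / (1 - 4 * b)).
  { apply Rdiv_lt_0_compat; nra. }
  split.
  - apply Rmult_lt_0_compat; [lra| apply sqrt_lt_R0; auto].
  - rewrite Rpow_mult_distr, pow2_sqrt by lra. field. lra.
Qed.

Lemma S_le b v : 0 < b < 1/6 -> v ^ 2 <= vmax b ^ 2 -> S b v <= mm b.
Proof.
  intros Hb Hv. destruct (S_prop b v Hb) as [H0 H2]. destruct (vmax_prop b Hb) as [_ Hm].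
  rewrite Hm in Hv. unfold mm.
  assert (S b v ^ 2 <= ((1 - 2*b)/2)^2).
  { rewrite H2. apply Rmult_le_compat_l with (r := 1 - 4*b) in Hv; [|lra].
    replace ((1 - 4 * b) * ((1 + 2 * b) * (1 - 6 * b) / (4 * (1 - 4 * b)))) with
      ((1 + 2 * b) * (1 - 6 * b) / 4) in Hv by (field; lra). nra. }
  nra.
Qed.

Lemma S_gt b v : 0 < b < 1/6 -> vmax b ^ 2 < v ^ 2 -> mm b < S b v.
Proof.
  intros Hb Hv. destruct (S_prop b v Hb) as [H0 H2]. destruct (vmax_prop b Hb) as [_ Hm].
  rewrite Hm in Hv. unfold mm.
  assert (((1 - 2*b)/2)^2 < S b v ^ 2).
  { rewrite H2. apply Rmult_lt_compat_l with (r := 1 - 4*b) in Hv; [|lra].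
    replace ((1 - 4 * b) * ((1 + 2 * b) * (1 - 6 * b) / (4 * (1 - 4 * b)))) with
      ((1 + 2 * b) * (1 - 6 * b) / 4) in Hv by (field; lra). nra. }
  nra.
Qed.

Lemma S_vmax b : 0 < b < 1/6 -> S b (vmax b) = mm b.
Proof.
  intros Hb. destruct (S_prop b (vmax b) Hb) as [H0 H2]. destruct (vmax_prop b Hb) as [_ Hm].
  rewrite Hm in H2. unfold mm.
  assert (S b (vmax b) ^ 2 = ((1 - 2*b)/2)^2) by (rewrite H2; field; lra).
  nra.
Qed.

Lemma Rmax0 p : (0 <= p /\ Rmax p 0 = p) \/ (p <= 0 /\ Rmax p 0 = 0).
Proof.
  destruct (Rle_or_lt 0 p).
  - left; split; auto; apply Rmax_left; auto.
  - right; split; [lra|]; apply Rmax_right; lra.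
Qed.

Lemma Hs_in b v : 0 < b < 1/6 -> v ^ 2 <= vmax b ^ 2 -> Hs b v = Gmax b.
Proof.
  intros Hb Hv. pose proof (S_le b v Hb Hv). unfold Hs, Gmax.
  rewrite Rmax_right by lra. field. unfold kk; lra.
Qed.

Lemma Hs_out b v : 0 < b < 1/6 -> vmax b ^ 2 < v ^ 2 -> Hs b v = G b v.
Proof.
  intros Hb Hv. pose proof (S_gt b v Hb Hv). unfold Hs. rewrite G_S by auto.
  rewrite Rmax_left by lra. reflexivity.
Qed.

Lemma Hs_out_lt b v : 0 < b < 1/6 -> vmax b ^ 2 < v ^ 2 -> Hs b v < Gmax b.
Proof.
  intros Hb Hv. pose proof (S_gt b v Hb Hv). unfold Hs, Gmax.
  rewrite Rmax_left by lra. unfold Rdiv. apply Rmult_lt_compat_r.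
  - apply Rinv_0_lt_compat; unfold kk; lra.
  - assert (0 < S b v - mm b) by lra. nra.
Qed.

Lemma Hs_le b v : 0 < b < 1/6 -> Hs b v <= Gmax b.
Proof.
  intros Hb. unfold Hs, Gmax. unfold Rdiv. apply Rmult_le_compat_r.
  - left; apply Rinv_0_lt_compat; unfold kk; lra.
  - nra.
Qed.

Lemma G_le_Hs b v : 0 < b < 1/6 -> G b v <= Hs b v.
Proof.
  intros Hb. rewrite G_S by auto. unfold Hs. unfold Rdiv. apply Rmult_le_compat_r.
  - left; apply Rinv_0_lt_compat; unfold kk; lra.
  - destruct (Rmax0 (S b v - mm b)) as [[_ E]|[_ E]]; rewrite E; [lra|].
    pose proof (pow2_ge_0 (S b v - mm b)). simpl. lra.
Qed.

Lemma S_convex b x y l : 0 < b < 1/6 -> 0 <= l <= 1 ->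
  S b (l * x + (1 - l) * y) <= l * S b x + (1 - l) * S b y.
Proof.
  intros Hb Hl.
  destruct (S_prop b x Hb) as [Hx0 Hx2]. destruct (S_prop b y Hb) as [Hy0 Hy2].
  destruct (S_prop b (l * x + (1 - l) * y) Hb) as [Hz0 Hz2].
  set (sx := S b x) in *. set (sy := S b y) in *. set (sz := S b (l*x+(1-l)*y)) in *.
  set (A := 4 * b^2) in *. set (B := 1 - 4 * b) in *.
  assert (HA : 0 <= A) by (unfold A; nra). assert (HB : 0 <= B) by (unfold B; lra).
  assert (Hxy : A + B * x * y <= sx * sy).
  { assert (E : (sx * sy)^2 - (A + B*x*y)^2 = A * B * (x - y)^2 + 0).
    { replace ((sx*sy)^2) with (sx^2 * sy^2) by ring. rewrite Hx2, Hy2. ring. }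
    assert (0 <= sx * sy) by nra.
    destruct (Rle_or_lt (A + B*x*y) 0); [lra|].
    assert (0 <= A * B * (x - y)^2).
    { apply Rmult_le_pos; [apply Rmult_le_pos; auto| apply pow2_ge_0]. }
    set (P := sx * sy) in *. set (Q := A + B * x * y) in *.
    assert (P^2 >= Q^2) by lra.
    nra. }
  assert (sz ^ 2 <= (l * sx + (1 - l) * sy)^2).
  { rewrite Hz2. replace ((l * sx + (1 - l) * sy)^2) with
      (l^2 * sx^2 + (1-l)^2 * sy^2 + 2 * l * (1-l) * (sx * sy)) by ring.
    rewrite Hx2, Hy2.
    assert (0 <= l * (1 - l)) by nra. nra. }
  set (R0 := l * sx + (1 - l) * sy) in *.
  assert (0 <= R0) by (unfold R0; nra).
  destruct (Rle_or_lt sz R0); auto.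
  assert (R0 * R0 < sz * sz) by nra. nra.
Qed.

Lemma Hs_concave b : 0 < b < 1/6 -> forall a c, concave_on a c (Hs b).
Proof.
  intros Hb a c x y l _ _ Hl.
  pose proof (S_convex b x y l Hb Hl) as Hc.
  unfold Hs.
  assert (Hk : 0 < kk b) by (unfold kk; lra).
  set (m := mm b) in *.
  set (p := S b x - m). set (q := S b y - m). set (r := S b (l*x+(1-l)*y) - m).
  assert (Hr : r <= l * p + (1 - l) * q) by (unfold r, p, q; lra).
  assert (Key : Rmax r 0 ^ 2 <= l * Rmax p 0 ^ 2 + (1 - l) * Rmax q 0 ^ 2).
  { assert (Hll : 0 <= l * (1 - l)) by nra.
    assert (HP : 0 <= Rmax p 0 /\ p <= Rmax p 0) by (split; [apply Rmax_r|apply Rmax_l]).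
    assert (HQ : 0 <= Rmax q 0 /\ q <= Rmax q 0) by (split; [apply Rmax_r|apply Rmax_l]).
    set (P := Rmax p 0) in *. set (Q := Rmax q 0) in *.
    assert (Hr2 : r <= l * P + (1 - l) * Q) by nra.
    assert (E : l * P^2 + (1 - l) * Q^2 = (l * P + (1 - l) * Q)^2 + l * (1 - l) * (P - Q)^2) by ring.
    assert (0 <= l * (1 - l) * (P - Q)^2) by (apply Rmult_le_pos; [auto|apply pow2_ge_0]).
    assert (0 <= l * P + (1 - l) * Q) by nra.
    destruct (Rmax0 r) as [[Hr0 Er]|[Hr0 Er]]; rewrite Er.
    - assert (r^2 <= (l * P + (1 - l) * Q)^2) by nra. lra.
    - assert (0 <= (l * P + (1 - l) * Q)^2) by apply pow2_ge_0. simpl; lra. }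
  apply (Rmult_le_reg_r (kk b)); auto.
  replace ((l * ((m ^ 2 - Rmax p 0 ^ 2) / kk b) + (1 - l) * ((m ^ 2 - Rmax q 0 ^ 2) / kk b)) * kk b)
    with (m^2 - (l * Rmax p 0 ^ 2 + (1 - l) * Rmax q 0 ^ 2)) by (field; lra).
  replace ((m ^ 2 - Rmax r 0 ^ 2) / kk b * kk b) with (m^2 - Rmax r 0 ^ 2) by (field; lra).
  lra.
Qed.
Lemma G_vmax b : 0 < b < 1/6 -> G b (vmax b) = Gmax b.
Proof. intros Hb. rewrite G_S, S_vmax by auto. unfold Gmax. field. unfold kk; lra. Qed.

Lemma G_even b v : G b (- v) = G b v.
Proof. unfold G. replace ((- v) ^ 2) with (v ^ 2) by ring. reflexivity. Qed.

Lemma Hs_env b um up : 0 < b < 1/6 -> vmax b < um -> up < - vmax b ->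
  is_upper_concave_envelope up um (G b) (Hs b).
Proof.
  intros Hb H1 H2. pose proof (vmax_prop b Hb) as [Hv0 _].
  split; [apply Hs_concave; auto|]. split.
  - intros; apply G_le_Hs; auto.
  - intros H' Hc Hge x Hx.
    destruct (Rle_or_lt (x^2) (vmax b ^ 2)) as [Hin|Hout].
    + rewrite Hs_in by auto.
      assert (Hxr : - vmax b <= x <= vmax b).
      { split; nra. }
      set (l := (vmax b - x) / (2 * vmax b)).
      assert (Hl : 0 <= l <= 1).
      { unfold l; split.
        - apply Rmult_le_pos; [lra| left; apply Rinv_0_lt_compat; lra].
        - apply (Rmult_le_reg_r (2 * vmax b)); [lra|]. unfold Rdiv.
          rewrite Rmult_assoc, Rinv_l; lra. }
      pose proof (Hc (- vmax b) (vmax b) l ltac:(lra) ltac:(lra) Hl) as Hh.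
      replace (l * - vmax b + (1 - l) * vmax b) with x in Hh by (unfold l; field; lra).
      pose proof (Hge (- vmax b) ltac:(lra)). pose proof (Hge (vmax b) ltac:(lra)).
      rewrite G_even in H.
      rewrite G_vmax in * by auto. nra.
    + rewrite Hs_out by auto. apply Hge; auto.
Qed.
Lemma divneg a p : a < 0 -> 0 < p -> a / p < 0.
Proof. intros. unfold Rdiv. pose proof (Rinv_0_lt_compat p H0). nra. Qed.
Lemma divpos a p : 0 < a -> 0 < p -> 0 < a / p.
Proof. intros. apply Rdiv_lt_0_compat; auto. Qed.
Lemma divnonneg a p : 0 <= a -> 0 < p -> 0 <= a / p.
Proof. intros. unfold Rdiv. pose proof (Rinv_0_lt_compat p H0). nra. Qed.
Lemma divnonpos a p : a <= 0 -> 0 < p -> a / p <= 0.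
Proof. intros. unfold Rdiv. pose proof (Rinv_0_lt_compat p H0). nra. Qed.

Theorem mainTheorem6 :
  forall b um up : R,
    0 < b < 1 / 6 ->
    -1 <= um <= 1 -> -1 <= up <= 1 ->
    vmax b < um -> up < - vmax b ->
    (* (1) the upper concave envelope of G on [up, um] *)
    is_upper_concave_envelope up um (G b)
      (fun v => if Rle_dec (- vmax b) v then
                  if Rle_dec v (vmax b) then G b (vmax b) else G b v
                else G b v)
    /\
    (* (2) the entropy solution: rarefaction, stationary shock at 0, rarefaction *)
    (forall (H dH : R -> R) (u : R -> R -> R),
       is_upper_concave_envelope up um (G b) H ->
       (forall v, up <= v <= um -> deriv_within up um H v (dH v)) ->
       riemann_formula up um dH u ->
       dH um < 0 < dH up /\
       forall t, 0 < t ->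
         (forall eps, 0 < eps -> exists delta, 0 < delta /\
            forall x, - delta < x < 0 -> Rabs (u x t - vmax b) < eps) /\
         (forall eps, 0 < eps -> exists delta, 0 < delta /\
            forall x, 0 < x < delta -> Rabs (u x t - - vmax b) < eps)).
Proof.
  intros b um up Hb Hum Hup H1 H2.
  pose proof (vmax_prop b Hb) as [Hv0 _].
  set (vm := vmax b) in *.
  pose proof (Hs_env b um up Hb H1 H2) as Henv.
  split.
  { replace (fun v => if Rle_dec (- vm) v then if Rle_dec v vm then G b vm else G b v else G b v)
      with (Hs b); auto.
    apply functional_extensionality. intros v.
    destruct (Rle_dec (- vm) v); [destruct (Rle_dec v vm)|].
    - unfold vm; rewrite G_vmax, Hs_in; auto. fold vm; nra.
    - rewrite Hs_out; auto. fold vm; nra.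
    - rewrite Hs_out; auto. fold vm; nra. }
  intros H dH u HH Hder Hrf.
  assert (HeqH : forall v, up <= v <= um -> H v = Hs b v).
  { intros v Hv. destruct HH as [Hc [Hge Hmin]]. destruct Henv as [Hc' [Hge' Hmin']].
    apply Rle_antisym; [apply Hmin; auto | apply Hmin'; auto]. }
  assert (Hc : concave_on up um H) by (destruct HH; auto).
  assert (Hvm : H vm = Gmax b) by (rewrite HeqH by lra; apply Hs_in; auto; unfold vm; lra).
  assert (Hvm' : H (- vm) = Gmax b) by (rewrite HeqH by lra; apply Hs_in; auto; unfold vm; nra).
  assert (Hle : forall v, up <= v <= um -> H v <= Gmax b)
    by (intros; rewrite HeqH by auto; apply Hs_le; auto).
  assert (Hlt : forall v, up <= v <= um -> vm ^ 2 < v ^ 2 -> H v < Gmax b)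
    by (intros; rewrite HeqH by auto; apply Hs_out_lt; auto).
  assert (Dum : dH um < 0).
  { pose proof (deriv_left up um H um (dH um) vm Hc (Hder um ltac:(lra)) ltac:(lra) H1 ltac:(lra)).
    pose proof (Hlt um ltac:(lra) ltac:(nra)).
    pose proof (divneg (H um - H vm) (um - vm) ltac:(lra) ltac:(lra)). lra. }
  assert (Dup : 0 < dH up).
  { pose proof (deriv_right up um H up (dH up) (- vm) Hc (Hder up ltac:(lra)) ltac:(lra) H2 ltac:(lra)).
    pose proof (Hlt up ltac:(lra) ltac:(nra)).
    pose proof (divpos (H (- vm) - H up) (- vm - up) ltac:(lra) ltac:(lra)). lra. }
  split; [lra|].
  intros t Ht. split.
  - intros eps Heps.
    set (w := vm + eps / 2).
    set (c := (Gmax b - Hs b w) / (w - vm)).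
    assert (Hcpos : 0 < c).
    { apply divpos; [|unfold w; lra]. pose proof (Hs_out_lt b w Hb ltac:(unfold w, vm in *; nra)). lra. }
    exists (Rmin (- dH um * t) (c * t)). split.
    { apply Rmin_glb_lt; nra. }
    intros x [Hx1 Hx2].
    pose proof (Rmin_l (- dH um * t) (c * t)). pose proof (Rmin_r (- dH um * t) (c * t)).
    destruct (Hrf x t Ht) as [_ [C2 _]].
    destruct (C2 ltac:(split; nra)) as [HU HdU].
    set (U := u x t) in *.
    assert (HdU2 : dH U * t = x) by (rewrite HdU; field; lra).
    assert (Dneg : dH U < 0) by nra.
    assert (Dgt : - c < dH U) by nra.
    destruct (Rlt_or_le U vm) as [HUl|HUl].
    + pose proof (deriv_right up um H U (dH U) vm Hc (Hder U HU) ltac:(lra) HUl ltac:(lra)).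
      pose proof (Hle U HU).
      pose proof (divnonneg (H vm - H U) (vm - U) ltac:(lra) ltac:(lra)). lra.
    + destruct (Rlt_or_le U (vm + eps)) as [HUr|HUr].
      * apply Rabs_def1; lra.
      * exfalso.
        pose proof (deriv_left up um H U (dH U) w Hc (Hder U HU) ltac:(unfold w; lra) ltac:(unfold w; lra) ltac:(lra)).
        pose proof (slope3 up um H vm w U Hc ltac:(lra) ltac:(unfold w; lra) ltac:(unfold w; lra) ltac:(lra)).
        assert ((H w - H vm) / (w - vm) = - c).
        { unfold c. rewrite (HeqH w) by (unfold w; lra). rewrite Hvm. field. unfold w; lra. }
        lra.
  - intros eps Heps.
    set (w := - vm - eps / 2).
    set (c := (Gmax b - Hs b w) / (- vm - w)).
    assert (Hcpos : 0 < c).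
    { apply divpos; [|unfold w; lra]. pose proof (Hs_out_lt b w Hb ltac:(unfold w, vm in *; nra)). lra. }
    exists (Rmin (dH up * t) (c * t)). split.
    { apply Rmin_glb_lt; nra. }
    intros x [Hx1 Hx2].
    pose proof (Rmin_l (dH up * t) (c * t)). pose proof (Rmin_r (dH up * t) (c * t)).
    destruct (Hrf x t Ht) as [_ [C2 _]].
    destruct (C2 ltac:(split; nra)) as [HU HdU].
    set (U := u x t) in *.
    assert (HdU2 : dH U * t = x) by (rewrite HdU; field; lra).
    assert (Dpos : 0 < dH U) by nra.
    assert (Dlt : dH U < c) by nra.
    destruct (Rlt_or_le (- vm) U) as [HUl|HUl].
    + pose proof (deriv_left up um H U (dH U) (- vm) Hc (Hder U HU) ltac:(lra) HUl ltac:(lra)).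
      pose proof (Hle U HU).
      pose proof (divnonpos (H U - H (- vm)) (U - - vm) ltac:(lra) ltac:(lra)). lra.
    + destruct (Rlt_or_le (- vm - eps) U) as [HUr|HUr].
      * apply Rabs_def1; lra.
      * exfalso.
        pose proof (deriv_right up um H U (dH U) w Hc (Hder U HU) ltac:(lra) ltac:(unfold w; lra) ltac:(unfold w; lra)).
        pose proof (slope3 up um H U w (- vm) Hc ltac:(lra) ltac:(unfold w; lra) ltac:(unfold w; lra) ltac:(lra)).
        assert ((H (- vm) - H w) / (- vm - w) = c).
        { unfold c. rewrite (HeqH w) by (unfold w; lra). rewrite Hvm'. reflexivity. }
        lra.
Qed.
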